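(* Let $(\xi_n)_n$ be $[0,\infty)$-valued random variables on $(\Omega,\mathcal{G},\mathbb{P})$, let $\mathcal{F}\subset\mathcal{G}$ be a sub-$\sigma$-algebra, and let $C:=\mathrm{conv}\{\xi_n:n\in\mathbb{N}\}$. Assume that for every $\epsilon\in L^0_+(\mathcal{F})$ there exists $a\in L^0(\mathcal{F})$ such that $\mathbb{P}(h\ge a\mid\mathcal{F})\le\epsilon$ for all $h\in C$. Then there exist a $[0,\infty)$-valued random variable $X$ and a sequence $(x_n)$ with $x_n\in\mathrm{conv}\{\xi_n,\xi_{n+1},\dots\}$ such that $x_n\to X$ almost surely.
   Context: $L^0(\mathcal{F})$ denotes a.s. finite real $\mathcal{F}$-measurable random variables and $L^0_+(\mathcal{F})$ its nonnegative elements; $\mathrm{conv}$ denotes the (finite) convex hull; inequalities are a.s. *)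

(* Defs.v *)
From HB Require Import structures.
From mathcomp Require Import all_boot all_order all_algebra.
From mathcomp Require Import all_classical all_reals all_analysis.
Set Implicit Arguments. Unset Strict Implicit. Unset Printing Implicit Defensive.
Import Order.TTheory GRing.Theory Num.Theory.
Import numFieldNormedType.Exports.
Local Open Scope classical_set_scope.
Local Open Scope ring_scope.

(* A sub-sigma-algebra F of the sigma-algebra [measurable] of T (= G). *)
Definition is_subsigma d (T : measurableType d) (F : set (set T)) :=
  sigma_algebra setT F /\ F `<=` measurable.

Definition Fmeasurable d (T : measurableType d) (R : realType)
  (F : set (set T)) (f : T -> R) :=
  forall B : set R, measurable B -> F (f @^-1` B).

(* Y is a version of the conditional probability P(A | F):
   Y is F-measurable, integrable, and E[Y 1_B] = P(A /\ B) for all B in F. *)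
Definition cond_prob_version d (T : measurableType d) (R : realType)
  (P : probability T R) (F : set (set T)) (A : set T) (Y : T -> R) :=
  [/\ Fmeasurable F Y, P.-integrable setT (EFin \o Y) &
      forall B, F B -> (\int[P]_(w in B) (Y w)%:E = P (A `&` B))%E].

Definition cond_prob_le d (T : measurableType d) (R : realType)
  (P : probability T R) (F : set (set T)) (A : set T) (eps : T -> R) :=
  exists Y, cond_prob_version P F A Y /\ {ae P, forall w, Y w <= eps w}.

(* h belongs to conv{ xi_n, xi_{n+1}, ... } (finite convex combinations
   with deterministic weights). *)
Definition in_tail_conv (T : Type) (R : realType) (xi : nat -> T -> R)
  (n : nat) (h : T -> R) :=
  exists (m : nat) (lam : nat -> R),
    [/\ forall i, 0 <= lam i, \sum_(n <= i < m) lam i = 1 &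
        h = (fun w => \sum_(n <= i < m) lam i * xi i w)].

(* Main.v *)
Require Import Defs.
From HB Require Import structures.
From mathcomp Require Import all_boot all_order all_algebra.
From mathcomp Require Import all_classical all_reals all_analysis.
From mathcomp Require Import measurable_realfun.
From mathcomp Require Import ring lra.
Import Order.TTheory GRing.Theory Num.Theory.
Import numFieldNormedType.Exports.
Local Open Scope classical_set_scope.
Local Open Scope ring_scope.

Set Implicit Arguments. Unset Strict Implicit.
Section Comb.
Context (R : realType).

Definition comb (n : nat) (lam : nat -> R) (m : nat) :=
  [/\ forall i, 0 <= lam i, forall i, (i < n)%N || (m <= i)%N -> lam i = 0
    & \sum_(0 <= i < m) lam i = 1].

Definition ev {T : Type} (lam : nat -> R) m (g : nat -> T -> R) (w : T) :=
  \sum_(0 <= i < m) lam i * g i w.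

Lemma sum_pad (F : nat -> R) m M : (m <= M)%N -> (forall i, (m <= i)%N -> F i = 0) ->
  \sum_(0 <= i < M) F i = \sum_(0 <= i < m) F i.
Proof.
move=> mM F0; rewrite (big_cat_nat (leq0n m) mM) /=.
rewrite [X in _ + X]big1_seq ?addr0 // => i /andP[_]; rewrite mem_index_iota.
by case/andP => + _; apply: F0.
Qed.

Lemma ev_pad {T : Type} n lam m M g (w : T) : comb n lam m -> (m <= M)%N ->
  ev lam M g w = ev lam m g w.
Proof.
case=> _ l0 _ mM; apply: sum_pad => // i mi.
by rewrite l0 ?mul0r // mi orbT.
Qed.

Lemma comb_le n n' lam m : (n' <= n)%N -> comb n lam m -> comb n' lam m.
Proof.
move=> nn [l1 l2 l3]; split => // i /orP[H|H]; apply: l2.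
  by rewrite (leq_trans H nn).
by rewrite H orbT.
Qed.

Definition mid (l1 l2 : nat -> R) := fun i => (l1 i + l2 i) / 2.

Lemma comb_mid n l1 m1 l2 m2 : comb n l1 m1 -> comb n l2 m2 ->
  comb n (mid l1 l2) (maxn m1 m2).
Proof.
move=> c1 c2; have [a1 b1 s1] := c1; have [a2 b2 s2] := c2; split.
- by move=> i; rewrite /mid divr_ge0 // addr_ge0.
- move=> i /orP[H|H]; rewrite /mid b1 ?b2 ?H ?addr0 ?mul0r //.
  + by rewrite (leq_trans (leq_maxr _ _) H) orbT.
  + by rewrite (leq_trans (leq_maxl _ _) H) orbT.
- rewrite /mid -big_distrl /= big_split /=.
  rewrite (@sum_pad _ m1 (maxn m1 m2) (leq_maxl m1 m2)); last by move=> i H; rewrite b1 // H orbT.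
  rewrite (@sum_pad _ m2 (maxn m1 m2) (leq_maxr m1 m2)); last by move=> i H; rewrite b2 // H orbT.
  by rewrite s1 s2 divff // pnatr_eq0.
Qed.

Lemma ev_mid {T : Type} n l1 m1 l2 m2 g (w : T) : comb n l1 m1 -> comb n l2 m2 ->
  ev (mid l1 l2) (maxn m1 m2) g w = (ev l1 m1 g w + ev l2 m2 g w) / 2.
Proof.
move=> c1 c2.
rewrite -(@ev_pad _ n l1 m1 (maxn m1 m2) g w c1 (leq_maxl _ _)).
rewrite -(@ev_pad _ n l2 m2 (maxn m1 m2) g w c2 (leq_maxr _ _)).
rewrite /ev /mid -big_split big_distrl /=; apply: eq_bigr => i _.
by ring.
Qed.

Lemma comb_unit n : comb n (fun i => (i == n)%:R) n.+1.
Proof.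
split.
- by move=> i; rewrite ler0n.
- by move=> i /orP[H|H]; [rewrite ltn_eqF | rewrite gtn_eqF].
- rewrite big_nat_recr //= eqxx big1_seq ?add0r // => i /andP[_].
  by rewrite mem_index_iota => /andP[_ H]; rewrite (ltn_eqF H).
Qed.

Lemma ev_unit {T : Type} n g (w : T) : ev (fun i => (i == n)%:R) n.+1 g w = g n w.
Proof.
rewrite /ev big_nat_recr //= eqxx mul1r big1_seq ?add0r // => i /andP[_].
by rewrite mem_index_iota => /andP[_ H]; rewrite (ltn_eqF H) mul0r.
Qed.

Lemma ev_bounds {T : Type} n lam m (g : nat -> T -> R) w :
  (forall i w, 0 <= g i w <= 1) -> comb n lam m -> 0 <= ev lam m g w <= 1.
Proof.
move=> gb [l1 _ l3]; apply/andP; split.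
  by apply: sumr_ge0 => i _; rewrite mulr_ge0 // (andP (gb i w)).1.
rewrite -l3; apply: ler_sum => i _; rewrite ler_piMr //.
by case/andP: (gb i w).
Qed.

Lemma comb_tail n lam m (F : nat -> R) : comb n lam m ->
  (n <= m)%N /\ \sum_(0 <= i < m) lam i * F i = \sum_(n <= i < m) lam i * F i.
Proof.
case=> l0 lz ls.
have nm : (n <= m)%N.
  rewrite leqNgt; apply/negP => mn; move: ls.
  rewrite big1_seq; first by move/eqP; rewrite eq_sym oner_eq0.
  move=> i /andP[_]; rewrite mem_index_iota => /andP[_ im].
  by apply: lz; rewrite (ltn_trans im mn).
split=> //; rewrite (big_cat_nat (leq0n n) nm) /= big1_seq ?add0r // => i.
by move=> /andP[_]; rewrite mem_index_iota => /andP[_ i_n]; rewrite lz ?i_n ?mul0r.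
Qed.

End Comb.
Arguments comb {R}.
Arguments ev {R T}.
Arguments mid {R}.

Unset Implicit Arguments.

Fixpoint cummax (f : nat -> nat) (k : nat) : nat :=
  match k with 0 => f 0%N | k'.+1 => maxn (cummax f k') (f k'.+1) end.

Lemma cummax_ge f k : (f k <= cummax f k)%N.
Proof. by case: k => //= k; exact: leq_maxr. Qed.

Lemma cummax_mono f k k' : (k <= k')%N -> (cummax f k <= cummax f k')%N.
Proof.
elim: k' => [|k' IH]; first by rewrite leqn0 => /eqP ->.
rewrite leq_eqVlt => /orP[/eqP -> //|]; rewrite ltnS => /IH H.
by apply: (leq_trans H); exact: leq_maxl.
Qed.

Section Core.
Context d (T : measurableType d) (R : realType) (P : probability T R).

Lemma bdd_integrable (f : T -> R) (M : R) : measurable_fun setT f ->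
  (forall w, `|f w| <= M) -> P.-integrable setT (EFin \o f).
Proof.
move=> mf fM; apply: measurable_bounded_integrable => //.
  by rewrite /= probability_setT ltry.
exists M; split; first by rewrite num_real.
by move=> M' HM' x _; exact: (le_trans (fM x) (ltW HM')).
Qed.

Lemma intZ (k : R) (f : T -> R) : P.-integrable setT (EFin \o f) ->
  P.-integrable setT (EFin \o (fun x => k * f x)).
Proof.
move=> H; apply: (eq_integrable measurableT (fun x => (k%:E * (EFin \o f) x)%E)).
  by move=> x _ /=; rewrite EFinM.
exact: integrableZl.
Qed.

Lemma intD (f g : T -> R) : P.-integrable setT (EFin \o f) ->
  P.-integrable setT (EFin \o g) ->
  P.-integrable setT (EFin \o (fun x => f x + g x)).
Proof.
move=> Hf Hg; apply: (eq_integrable measurableT ((EFin \o f) \+ (EFin \o g))%E).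
  by move=> x _ /=; rewrite EFinD.
exact: integrableD.
Qed.

Definition Q (h : T -> R) := (\int[P]_w (h w ^+ 2))%R.

Lemma Q_ge0 (h : T -> R) : 0 <= Q h.
Proof. by apply: Rintegral_ge0 => w _; exact: sqr_ge0. Qed.

Lemma Q_le1 (h : T -> R) : measurable_fun setT h -> (forall w, `|h w| <= 1) -> Q h <= 1.
Proof.
move=> mh hb.
have mh2 : measurable_fun setT (fun w => h w ^+ 2) by exact: measurable_realfun.measurable_funX.
have h21 : forall w, `|h w ^+ 2| <= 1.
  by move=> w; rewrite normrX expr_le1.
have := @le_Rintegral _ _ _ P setT (fun w => h w ^+ 2) (fun _ => 1) measurableT.
rewrite Rintegral_cst //.
rewrite /= probability_setT mul1r; apply.
- exact: bdd_integrable _ _ mh2 h21.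
- by apply: (@bdd_integrable _ 1) => // w; rewrite normr1.
- by move=> w _; rewrite (le_trans (ler_norm _) (h21 w)).
Qed.

Lemma Q_par (h1 h2 : T -> R) : measurable_fun setT h1 -> measurable_fun setT h2 ->
  (forall w, `|h1 w| <= 1) -> (forall w, `|h2 w| <= 1) ->
  Q (fun w => h1 w - h2 w) =
  2 * Q h1 + 2 * Q h2 - 4 * Q (fun w => (h1 w + h2 w) / 2).
Proof.
move=> m1 m2 b1 b2.
have B1 : forall w, `|h1 w ^+ 2| <= 1 by move=> w; rewrite normrX expr_le1.
have B2 : forall w, `|h2 w ^+ 2| <= 1 by move=> w; rewrite normrX expr_le1.
have mc : measurable_fun setT (fun w => (h1 w + h2 w) / 2).
  by apply: measurable_realfun.measurable_funM => //; exact: measurable_realfun.measurable_funD.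
have B3 : forall w, `|((h1 w + h2 w) / 2) ^+ 2| <= 1.
  move=> w; rewrite normrX expr_le1 // normrM normfV.
  rewrite ler_pdivrMr ?normr_gt0 // mul1r (le_trans (ler_normD _ _)) //.
  by rewrite normr_nat; have := b1 w; have := b2 w; lra.
have i1 := bdd_integrable _ _ (measurable_realfun.measurable_funX 2 m1) B1.
have i2 := bdd_integrable _ _ (measurable_realfun.measurable_funX 2 m2) B2.
have i3 := bdd_integrable _ _ (measurable_realfun.measurable_funX 2 mc) B3.
rewrite /Q -!RintegralZl //.
rewrite -RintegralD // -?RintegralB //.
- by apply: eq_Rintegral => w _; field.
- by apply: intD; apply: intZ.
- exact: intZ.
- exact: intZ.
- exact: intZ.
Qed.

Lemma abs_le_sq (t x : R) : 0 < t -> `|x| <= t^-1 + t * x ^+ 2.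
Proof.
move=> t0; rewrite -(real_normK (num_real x)).
have y0 : 0 <= `|x| by [].
move: (`|x|) y0 => y y0.
rewrite -(ler_pM2l t0) mulrDr mulfV ?gt_eqF //; nra.
Qed.

Lemma core (g : nat -> T -> R) :
  (forall i, measurable_fun setT (g i)) -> (forall i w, 0 <= g i w <= 1) ->
  exists (L : nat -> nat -> R) (M : nat -> nat),
    (forall k, comb k (L k) (M k)) /\
    ({ae P, forall w, cvgn (fun k => ev (L k) (M k) g w)}).
Proof.
move=> mg gb.
have mev : forall lam m, measurable_fun setT (ev lam m g).
  move=> lam m; rewrite /ev; apply: measurable_sum => i.
  by apply: measurable_realfun.measurable_funM => //; exact: measurable_cst.
have bev : forall n lam m w, comb n lam m -> `|ev lam m g w| <= 1.
  move=> n lam m w c; have /andP[h0 h1] := ev_bounds w gb c.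
  by rewrite ger0_norm.
pose S n := [set r | exists lam m, comb n lam m /\ r = Q (ev lam m g)].
have S0 : forall n, S n (Q (ev (fun i => (i == n)%:R) n.+1 g)).
  by move=> n; exists (fun i => (i == n)%:R), n.+1; split => //; exact: comb_unit.
have Sinf : forall n, has_inf (S n).
  move=> n; split; first by exists (Q (ev (fun i => (i == n)%:R) n.+1 g)).
  by exists 0 => r [lam [m [_ ->]]]; exact: Q_ge0.
pose s n := inf (S n).
have s_le : forall n lam m, comb n lam m -> s n <= Q (ev lam m g).
  by move=> n lam m c; apply: (ge_inf (Sinf n).2); exists lam, m.
have s_mono : forall n n', (n <= n')%N -> s n <= s n'.
  move=> n n' nn; apply: lb_le_inf; first exact: (Sinf n').1.
  by move=> r [lam [m [c ->]]]; apply: s_le; exact: comb_le c.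
have s_le1 : forall n, s n <= 1.
  move=> n; apply: le_trans (s_le _ _ _ (comb_unit R n)) _.
  by apply: Q_le1 => // w; exact: (bev n _ _ w (comb_unit R n)).
pose sig := sup (range s).
have hsup : has_sup (range s).
  by split; [exists (s 0%N), 0%N | exists 1 => _ [n _ <-]; exact: s_le1].
have s_le_sig : forall n, s n <= sig.
  by move=> n; apply: sup_upper_bound => //; exists n.
pose t k : R := (2 ^ k.+1)%:R.
have t_gt0 : forall k, 0 < t k by move=> k; rewrite ltr0n expn_gt0.
pose e k : R := (8 * t k ^+ 2)^-1.
have e_gt0 : forall k, 0 < e k.
  by move=> k; rewrite invr_gt0 mulr_gt0 // exprn_gt0.
have e_dec : forall k, e k.+1 <= e k.
  move=> k; rewrite lef_pV2 ?posrE ?mulr_gt0 ?exprn_gt0 //.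
  rewrite ler_pM2l // ler_pXn2r ?nnegrE ?ltW //.
  by rewrite /t ltr_nat ltn_exp2l.
have : forall k, exists n, sig - e k < s n.
  by move=> k; have [_ [n _ <-] H] := sup_adherent (e_gt0 k) hsup; exists n.
move=> /choice[nu Hnu].
pose mu := cummax (fun k => maxn k (nu k)).
have mu_mono : forall k k', (k <= k')%N -> (mu k <= mu k')%N.
  by move=> k k'; exact: cummax_mono.
have mu_ge : forall k, (k <= mu k)%N.
  move=> k; apply: leq_trans (cummax_ge (fun k => maxn k (nu k)) k).
  exact: leq_maxl.
have Hmu : forall k, sig - e k < s (mu k).
  move=> k; apply: lt_le_trans (Hnu k) (s_mono _ _ _).
  exact: leq_trans (leq_maxr k (nu k)) (cummax_ge (fun k => maxn k (nu k)) k).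
have : forall k, exists p : (nat -> R) * nat,
    comb (mu k) p.1 p.2 /\ Q (ev p.1 p.2 g) < s (mu k) + e k.
  move=> k; have [_ [lam [m [c ->]]] H] := inf_adherent (e_gt0 k) (Sinf (mu k)).
  by exists (lam, m).
move=> /choice[p Hp].
pose L k := (p k).1; pose M k := (p k).2.
exists L, M; split.
  by move=> k; apply: comb_le (mu_ge k) (Hp k).1.
pose h k := ev (L k) (M k) g.
have mh : forall k, measurable_fun setT (h k) by move=> k; exact: mev.
have bh : forall k w, `|h k w| <= 1.
  by move=> k w; exact: (bev _ _ _ w (Hp k).1).
have Qh : forall k, Q (h k) < sig + e k.
  move=> k; apply: lt_le_trans (Hp k).2 _.
  by rewrite lerD2r.
have Qd : forall k, Q (fun w => h k w - h k.+1 w) <= (t k ^+ 2)^-1.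
  move=> k.
  have c1 := (Hp k).1.
  have c2 : comb (mu k) (L k.+1) (M k.+1).
    exact: comb_le (mu_mono _ _ (leqnSn k)) (Hp k.+1).1.
  have cm := comb_mid c1 c2.
  have Qc : sig - e k < Q (fun w => (h k w + h k.+1 w) / 2).
    apply: lt_le_trans (Hmu k) _.
    have -> : (fun w => (h k w + h k.+1 w) / 2) =
              ev (mid (L k) (L k.+1)) (maxn (M k) (M k.+1)) g.
      by apply/funext => w; rewrite (ev_mid g w c1 c2).
    exact: s_le cm.
  rewrite Q_par //.
  have := Qh k; have := Qh k.+1; have := e_dec k.
  have -> : (t k ^+ 2)^-1 = 8 * e k.
    by rewrite /e; field; rewrite ?gt_eqF ?t_gt0.
  lra.
pose phi k w := t k * (h k w - h k.+1 w) ^+ 2.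
have mphi : forall k, measurable_fun setT (phi k).
  move=> k; apply: measurable_realfun.measurable_funM; first exact: measurable_cst.
  apply: measurable_realfun.measurable_funX.
  exact: measurable_realfun.measurable_funB.
have phi0 : forall k w, 0 <= phi k w.
  by move=> k w; rewrite mulr_ge0 ?sqr_ge0 ?ltW.
have idk : forall k, P.-integrable setT (EFin \o (fun w => (h k w - h k.+1 w) ^+ 2)).
  move=> k; apply: (@bdd_integrable _ 4).
    by apply: measurable_realfun.measurable_funX; exact: measurable_realfun.measurable_funB.
  move=> w; rewrite normrX (_ : 4 = 2 ^+ 2); last by rewrite expr2; lra.
  rewrite ler_pXn2r ?nnegrE //; apply: le_trans (ler_normB _ _) _.
  by have := bh k w; have := bh k.+1 w; lra.
have iphi : forall k, P.-integrable setT (EFin \o phi k).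
  by move=> k; exact: intZ.
have Iphi : forall k, (\int[P]_w phi k w) <= (t k)^-1.
  move=> k; rewrite /phi RintegralZl //.
  apply: le_trans (ler_wpM2l (ltW (t_gt0 k)) (Qd k)) _.
  by rewrite expr2 invfM mulrA mulfV ?mul1r ?gt_eqF.
pose Sf : T -> \bar R := fun w => (\sum_(k <oo) (phi k w)%:E)%E.
have Sf0 : forall w, (0 <= Sf w)%E.
  by move=> w; apply: nneseries_ge0 => k _ _; rewrite lee_fin.
have EI : forall k, (\int[P]_w (phi k w)%:E)%E = (\int[P]_w phi k w)%:E.
  move=> k; rewrite /Rintegral fineK //.
  exact: (integrable_fin_num measurableT (iphi k)).
have mSf : measurable_fun setT Sf.
  have := @ge0_emeasurable_sum _ _ _ setT (fun k w => (phi k w)%:E) xpredT.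
  apply.
  - by move=> k w _ _; rewrite lee_fin.
  - by move=> k _; apply/measurable_EFinP.
have intS : P.-integrable setT Sf.
  apply/integrableP; split => //.
  under eq_integral do rewrite gee0_abs //.
  rewrite integral_nneseries //; last first.
    - by move=> k w _; rewrite lee_fin.
    - by move=> k; apply/measurable_EFinP.
  apply: (@le_lt_trans _ _ 1%:E); last exact: ltry.
  apply: le_trans (epsilon_trick0 xpredT ler01).
  apply: lee_nneseries.
    by move=> k _ _; apply: integral_ge0 => w _; rewrite lee_fin.
  move=> k _; rewrite EI lee_fin div1r.
  exact: Iphi.
have ae := integrable_ae measurableT intS.
apply: filterS ae => w /(_ I) Sfin.
have psum : forall K, \sum_(0 <= k < K) phi k w <= fine (Sf w).
  move=> K; rewrite -lee_fin fineK // -sumEFin.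
  by apply: nneseries_lim_ge => k _ _; rewrite lee_fin.
have tsum : forall K, \sum_(0 <= k < K) (t k)^-1 <= 1.
  move=> K; rewrite -lee_fin -sumEFin.
  apply: le_trans (epsilon_trick0 xpredT ler01).
  apply: le_trans (nneseries_lim_ge K _); last first.
    by move=> k _ _; rewrite lee_fin divr_ge0.
  by apply: lee_sum => k _; rewrite div1r.
pose a K := \sum_(0 <= k < K) `|h k w - h k.+1 w|.
have aB : forall K, a K <= 1 + fine (Sf w).
  move=> K; apply: le_trans (lerD (tsum K) (psum K)).
  rewrite -big_split /=; apply: ler_sum => k _.
  exact: abs_le_sq.
have aS : forall K, a K.+1 = a K + `|h K w - h K.+1 w|.
  by move=> K; rewrite /a big_nat_recr.
pose v K := h K w + a K.
have ca : cvgn a.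
  apply: nondecreasing_is_cvgn.
    by apply/nondecreasing_seqP => K; rewrite aS lerDl.
  by exists (1 + fine (Sf w)) => _ [K _ <-].
have cv : cvgn v.
  apply: nondecreasing_is_cvgn.
    apply/nondecreasing_seqP => K; rewrite /v aS.
    have := ler_norm (h K w - h K.+1 w); lra.
  exists (1 + (1 + fine (Sf w))) => _ [K _ <-]; apply: lerD; last exact: aB.
  exact: le_trans (ler_norm _) (bh K w).
have -> : (fun k => ev (L k) (M k) g w) = v - a.
  by apply/funext => K; rewrite /v /= addrK.
exact: is_cvgB.
Qed.

End Core.

Unset Implicit Arguments.

Theorem mainTheorem13 (d : measure_display) (T : measurableType d)
  (R : realType) (P : probability T R) (F : set (set T))
  (xi : nat -> T -> R) :
  is_subsigma F ->
  (forall n, measurable_fun setT (xi n)) ->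
  (forall n w, 0 <= xi n w) ->
  (forall eps : T -> R, Fmeasurable F eps -> (forall w, 0 <= eps w) ->
     exists a : T -> R, Fmeasurable F a /\
       forall h, in_tail_conv xi 0 h ->
         cond_prob_le P F [set w | a w <= h w] eps) ->
  exists (X : T -> R) (x : nat -> T -> R),
    [/\ measurable_fun setT X, (forall w, 0 <= X w),
        (forall n, in_tail_conv xi n (x n)) &
        {ae P, forall w, (fun n => x n w) @ \oo --> X w}].
Proof.
move=> [[F0 FC FU] FG] mxi xi0 Hyp.
have FT : F setT by rewrite -setC0 -setTD; exact: FC.
have Fcst : Fmeasurable F (fun _ : T => (0 : R)).
  by move=> B mB; rewrite preimage_cst; case: ifP.
have [a [Fa Ha]] := Hyp _ Fcst (fun _ => lexx (0 : R)).
have ma : measurable_fun setT a.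
  by move=> _ B mB; rewrite setTI; apply: FG; exact: Fa.
have An : forall n, {ae P, forall w, xi n w < a w}.
  move=> n.
  pose A := [set w | a w <= xi n w].
  have mA : measurable A.
    have H1 : measurable [set true] by [].
    have := measurable_fun_ler ma (mxi n) measurableT H1.
    by rewrite setTI (_ : _ @^-1` _ = A) //; apply/seteqP; split => w /=.
  have tc : in_tail_conv xi 0 (xi n).
    exists n.+1, (fun i => (i == n)%:R); split.
    - by move=> i; rewrite ler0n.
    - by have [_ _ ->] := comb_unit R n.
    - by apply/funext => w; rewrite -(ev_unit n xi w).
  have [Y [[FY iY EY] aeY]] := Ha _ tc.
  have PA0 : P A = 0%E.
    apply/eqP; rewrite eq_le measure_ge0 andbT.
    rewrite -[A]setIT -EY //.
    have mY : measurable_fun setT (fun w => (Y w)%:E).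
      apply/measurable_EFinP => _ B mB; rewrite setTI; apply: FG; exact: FY.
    rewrite integralE.
    rewrite (ae_eq_integral (cst 0%E)) //; last 2 first.
    - exact: measurable_funepos.
    - apply: filterS aeY => w Yw _.
      by rewrite funeposE /=; apply/max_idPr; rewrite lee_fin; exact: Yw.
    rewrite integral0 sub0e oppe_le0.
    by apply: integral_ge0 => w _; exact: funeneg_ge0.
  by exists A; split => // w /= /negP; rewrite -leNgt.
have aeB := ae_foralln An.
pose G w := (1 + `|a w|)^-1.
have G_gt0 : forall w, 0 < G w by move=> w; rewrite invr_gt0 ltr_pwDl.
have mG : measurable_fun setT G.
  apply: (measurableT_comp (f := fun r : R => (1 + `|r|)^-1)) => //.
  apply: continuous_measurable_fun => r.
  apply: (continuousV (s := fun r : R => 1 + `|r|)); first by rewrite gt_eqF // ltr_pwDl.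
  have h1 : (fun _ : R => (1 : R)) x @[x --> r] --> (1 : R) by exact: cvg_cst.
  have h2 : `|x| @[x --> r] --> `|r| by exact: (@norm_continuous _ R^o r).
  exact: (cvgD h1 h2).
pose g n w := Num.min (xi n w * G w) 1.
have mg : forall n, measurable_fun setT (g n).
  move=> n; apply: measurable_minr; last exact: measurable_cst.
  exact: measurable_funM.
have gb : forall n w, 0 <= g n w <= 1.
  move=> n w; rewrite /g le_min ge_min lexx orbT andbT ler01 andbT.
  by rewrite mulr_ge0 // ltW.
have [L [M [cL aeC]]] := @core _ _ _ P g mg gb.
pose x k := ev (L k) (M k) xi.
have mx : forall k, measurable_fun setT (x k).
  move=> k; rewrite /x /ev; apply: measurable_sum => i.
  by apply: measurable_funM => //; exact: measurable_cst.
pose X w := Num.max (fine (limn_esup (fun k => (x k w)%:E))) 0.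
exists X, x; split.
- apply: measurable_maxr; last exact: measurable_cst.
  apply: measurableT_comp; first exact: fine_measurable.
  by apply: measurable_fun_limn_esup => k; apply/measurable_EFinP.
- by move=> w; rewrite /X le_max lexx orbT.
- move=> k; have [_ lz ls] := cL k.
  have [kM Es] := comb_tail (fun _ => 1) (cL k).
  exists (M k), (L k); split.
  + by have [] := cL k.
  + by rewrite -ls; move: Es; under eq_bigr do rewrite mulr1; under [X in _ = X -> _]eq_bigr do rewrite mulr1.
  + by apply/funext => w; rewrite /x /ev; have [_ ->] := comb_tail (fun i => xi i w) (cL k).
- apply: filterS2 aeC aeB => w Hc Hb.
  have Eg : forall k, x k w = ev (L k) (M k) g w * (1 + `|a w|).
    move=> k; rewrite /x /ev big_distrl /=; apply: eq_bigr => i _.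
    have -> : g i w = xi i w * G w.
      apply/min_idPl; rewrite /G ler_pdivrMr ?ltr_pwDl // mul1r.
      by have := Hb i; have := ler_norm (a w); lra.
    by rewrite /G -!mulrA mulVf ?mulr1 // gt_eqF // ltr_pwDl.
  have cu : cvgn (fun k => x k w).
    rewrite (_ : (fun k => x k w) = ((fun k => ev (L k) (M k) g w) \* (fun=> 1 + `|a w|))).
      exact: is_cvgMr_tmp.
    by apply/funext => k; rewrite Eg.
  have u0 : 0 <= limn (fun k => x k w).
    apply: limr_ge => //; apply: nearW => k.
    by apply: sumr_ge0 => i _; rewrite mulr_ge0 //; have [] := cL k.
  have -> : X w = limn (fun k => x k w).
    rewrite /X (cvg_limn_einf_sup (_ : _ @ \oo --> (limn (fun k => x k w))%:E)).2.
      by rewrite /= max_l.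
    apply: cvg_EFin; first exact: nearW.
    exact: cu.
  exact: cu.
Qed.
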